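(* Let $G$ be a $4$-graph. Then $G$ is $\mathscr C_2^{(4)}$-hom-free if and only if there is a function $c$ assigning to every $3$-element subset $T$ of $V(G)$ either the label ''blue'' or one of the three vertices of $T$, such that for every edge $e\in E(G)$ there is a vertex $v\in e$ for which $c(T)=v$ for each of the three $3$-subsets $T\subset e$ containing $v$, and $c(e\setminus\{v\})=$ ''blue''.
   Context: A $4$-graph is a $4$-uniform hypergraph. For $\ell>4$, the tight cycle $C_\ell^{(4)}$ has vertices $v_1,\dots,v_\ell$ and edges $\{v_i,v_{i+1},v_{i+2},v_{i+3}\}$ for $1\le i\le\ell$ (indices modulo $\ell$). A homomorphism $F\to G$ of $r$-graphs is a map $\phi:V(F)\to V(G)$ such that for every edge $\{x_1,\dots,x_r\}$ of $F$, the image $\{\phi(x_1),\dots,\phi(x_r)\}$ is an edge of $G$ (in particular these $r$ images are distinct). $G$ is $F$-hom-free if there is no homomorphism $F\to G$, and it is hom-free with respect to a family if it is $F$-hom-free for every member $F$. $\mathscr C_k^{(r)}$ denotes the family of all tight cycles $C_\ell^{(r)}$ with $\ell>r$ and $\ell\equiv k\pmod r$. *)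

(* Defs.v *)
From mathcomp Require Import all_boot.
Set Implicit Arguments. Unset Strict Implicit. Unset Printing Implicit Defensive.

Definition uniform4 (V : finType) (E : {set {set V}}) : Prop :=
  forall e, e \in E -> #|e| = 4.

(* Tight cycle C_l^(4): vertices 0..l-1, edges {i,i+1,i+2,i+3} (mod l).
   A map phi from its vertex set is given as phi : nat -> V, of which only
   the values on 0..l-1 matter. *)
Definition tc_vtx (l i k : nat) : nat := (i + k) %% l.

Definition tight_cycle_hom (V : finType) (E : {set {set V}}) (l : nat)
    (phi : nat -> V) : Prop :=
  forall i, i < l ->
    uniq [:: phi (tc_vtx l i 0); phi (tc_vtx l i 1);
             phi (tc_vtx l i 2); phi (tc_vtx l i 3)] /\
    [set phi (tc_vtx l i 0); phi (tc_vtx l i 1);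
         phi (tc_vtx l i 2); phi (tc_vtx l i 3)] \in E.

Definition tc_family_hom_free (V : finType) (E : {set {set V}}) (k : nat) : Prop :=
  forall l, 4 < l -> l = k %[mod 4] -> ~ exists phi : nat -> V, tight_cycle_hom E l phi.

(* A labelling c of the 3-subsets of V: None = "blue", Some v = vertex v,
   required to satisfy v \in T. *)
Definition valid_labelling (V : finType) (c : {set V} -> option V) : Prop :=
  forall T : {set V}, #|T| = 3 -> forall v, c T = Some v -> v \in T.

Definition good_labelling (V : finType) (E : {set {set V}})
    (c : {set V} -> option V) : Prop :=
  valid_labelling c /\
  forall e, e \in E ->
    exists2 v, v \in e &
      (forall T : {set V}, T \subset e -> #|T| = 3 -> v \in T -> c T = Some v) /\
      c (e :\ v) = None.

(* Main.v *)
Require Import Defs.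
From mathcomp Require Import all_boot fingroup perm zify.
Set Implicit Arguments. Unset Strict Implicit. Unset Printing Implicit Defensive.

Section P3.
Definition i4 := iota 0 4.
Definition perms4 : seq (seq nat) := permutations i4.
Definition comp (c d : seq nat) := [seq nth 0 d (nth 0 c k) | k <- i4].
Definition fpfc (c : seq nat) := all (fun k => nth 0 c k != k) i4.

Definition conj_check :=
  all (fun c => if fpfc c then
     has (fun c' => has (fun r => all (fun k => nth 0 c (nth 0 c' k) == nth 0 c' ((k + r) %% 4)) i4)
        [:: 1; 2; 3]) perms4 else true) perms4.

Lemma conj_check_ok : conj_check.
Proof. vm_compute. reflexivity. Qed.

Definition words (g0 g1 g2 g3 : seq nat) :=
  [:: comp g0 g1; comp g0 g2; comp g0 g3; comp g1 g2; comp g1 g3; comp g2 g3;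
      comp (comp g0 g1) g2; comp (comp g0 g1) g3; comp (comp g0 g2) g3; g0; g1; g2; g3].

Definition grp_check :=
  all (fun g0 => if nth 0 g0 0 == 0 then true else
  all (fun g1 => if nth 0 g1 1 == 1 then true else
  all (fun g2 => if nth 0 g2 2 == 2 then true else
  all (fun g3 => if nth 0 g3 3 == 3 then true else
    has fpfc (words g0 g1 g2 g3)) perms4) perms4) perms4) perms4.

Lemma grp_check_ok : grp_check.
Proof. vm_compute. reflexivity. Qed.

Definition code (g : {perm 'I_4}) : seq nat := [seq val (g (inord k)) | k <- i4].
Implicit Types g h : {perm 'I_4}.

Lemma nth_code g n : n < 4 -> nth 0 (code g) n = g (inord n).
Proof. by move=> hn; rewrite (nth_map 0) ?size_iota // nth_iota. Qed.

Lemma code_perms g : code g \in perms4.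
Proof.
have u : uniq (code g).
  rewrite map_inj_in_uniq ?iota_uniq // => a b; rewrite !mem_iota /= => ha hb /val_inj /perm_inj.
  by move=> /(congr1 (@nat_of_ord 4)); rewrite !inordK.
have sb : {subset code g <= i4} by move=> x /mapP [k _ ->]; rewrite mem_iota /=.
have [_ h] := uniq_min_size u sb (eq_leq (esym (size_map _ _))).
by rewrite mem_permutations; apply: uniq_perm u (iota_uniq 0 4) h.
Qed.

Lemma code_mul g h : code (g * h)%g = comp (code g) (code h).
Proof.
rewrite {1}/code /comp; apply/eq_in_map => k; rewrite mem_iota /= => hk.
by rewrite nth_code // nth_code ?ltn_ord // permM inord_val.
Qed.

Lemma fpfc_code g : fpfc (code g) -> forall k, g k != k.
Proof.
move=> /allP h k; have := h k; rewrite mem_iota /= ltn_ord => /(_ isT).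
rewrite nth_code // inord_val; apply: contra => /eqP -> //.
Qed.

Lemma code_fpfc g : (forall k, g k != k) -> fpfc (code g).
Proof.
move=> h; apply/allP => k; rewrite mem_iota /= => hk.
rewrite nth_code //; have := h (inord k); apply: contra => /eqP e.
by apply/eqP/val_inj; rewrite /= e inordK.
Qed.

Lemma code_nfix g (k : 'I_4) : g k != k -> nth 0 (code g) k != k.
Proof.
move=> h; rewrite nth_code // inord_val; apply: contra h => /eqP e.
by apply/eqP/val_inj.
Qed.

Lemma grp_fix (G : pred {perm 'I_4}) :
  (forall g h, G g -> G h -> G (g * h)%g) -> (forall g, G g -> exists k, g k = k) ->
  exists k, forall g, G g -> g k = k.
Proof.
move=> Gm Gf.
case: (boolP [exists k, [forall g, G g ==> (g k == k)]]) => [/existsP [k /forallP hk]|hn].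
  by exists k => g Gg; apply/eqP; exact: (implyP (hk g) Gg).
have ex : forall k : 'I_4, exists g, G g /\ g k != k.
  move=> k; move/existsPn: hn => /(_ k) /forallPn [g]; rewrite negb_imply => /andP [Gg hg].
  by exists g.
have [g0 [G0 h0]] := ex (inord 0).
have [g1 [G1 h1]] := ex (inord 1).
have [g2 [G2 h2]] := ex (inord 2).
have [g3 [G3 h3]] := ex (inord 3).
have := grp_check_ok.
move/allP/(_ _ (code_perms g0)); have := code_nfix h0; rewrite inordK // => /negbTE ->.
move/allP/(_ _ (code_perms g1)); have := code_nfix h1; rewrite inordK // => /negbTE ->.
move/allP/(_ _ (code_perms g2)); have := code_nfix h2; rewrite inordK // => /negbTE ->.
move/allP/(_ _ (code_perms g3)); have := code_nfix h3; rewrite inordK // => /negbTE ->.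
have -> : words (code g0) (code g1) (code g2) (code g3) =
  map code [:: g0 * g1; g0 * g2; g0 * g3; g1 * g2; g1 * g3; g2 * g3;
               g0 * g1 * g2; g0 * g1 * g3; g0 * g2 * g3; g0; g1; g2; g3]%g.
  by rewrite /= !code_mul.
rewrite has_map => /hasP [w wi /fpfc_code hw].
have Gw : G w.
  move: wi; rewrite !inE => /orP[/eqP->|/orP[/eqP->|/orP[/eqP->|/orP[/eqP->|/orP[/eqP->|
    /orP[/eqP->|/orP[/eqP->|/orP[/eqP->|/orP[/eqP->|/orP[/eqP->|/orP[/eqP->|/orP[/eqP->|/eqP->]]]]]]]]]]]];
  by rewrite ?Gm.
have [k hk] := Gf w Gw.
by move: (hw k); rewrite hk eqxx.
Qed.

Lemma conj_rot (p : {perm 'I_4}) : (forall k, p k != k) ->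
  exists (s : {perm 'I_4}) (r : nat), r %% 4 != 0 /\
    forall k : 'I_4, p (s k) = s (inord ((k + r) %% 4)).
Proof.
move=> hp; have := conj_check_ok.
move/allP/(_ _ (code_perms p)); rewrite code_fpfc //.
move/hasP => [c' c'in /hasP [r rin /allP hk]].
have c'u : uniq c' by move: c'in; rewrite mem_permutations => /perm_uniq ->; exact: iota_uniq.
have c'm : forall k, k < 4 -> nth 0 c' k < 4.
  move=> k hk'; have : nth 0 c' k \in c'.
    by apply: mem_nth; move: c'in; rewrite mem_permutations => /perm_size ->; rewrite size_iota.
  by move: c'in; rewrite mem_permutations => /perm_mem ->; rewrite mem_iota.
have c's : size c' = 4 by move: c'in; rewrite mem_permutations => /perm_size ->; rewrite size_iota.
have sinj : injective (fun k : 'I_4 => (inord (nth 0 c' k) : 'I_4)).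
  move=> a b /(congr1 (@nat_of_ord 4)); rewrite !inordK ?c'm // => /eqP.
  by rewrite nth_uniq ?c's // => /eqP /val_inj.
exists (perm sinj), r; split.
  by move: rin; rewrite !inE => /or3P[] /eqP ->.
move=> k; apply: val_inj; rewrite !permE /=.
have := hk k; rewrite mem_iota /= ltn_ord => /(_ isT) /eqP.
rewrite -(nth_code p) ?c'm // => ->.
have hm : (k + r) %% 4 < 4 by rewrite ltn_mod.
by rewrite inordK ?c'm ?ltn_ord // inordK.
Qed.

End P3.

Section Main.
Variable V : finType.
Variable E : {set {set V}}.
Hypothesis hE : uniform4 E.

Definition goodv (c : {set V} -> option V) (e : {set V}) (v : V) :=
  (forall T : {set V}, T \subset e -> #|T| = 3 -> v \in T -> c T = Some v) /\
  c (e :\ v) = None.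

Lemma card3 (b c0 d : V) : uniq [:: b; c0; d] -> #|[set b; c0; d]| = 3.
Proof.
move=> /card_uniqP /= h; rewrite -h; apply: eq_card => x; by rewrite !inE -!orbA.
Qed.

Lemma step_lemma (c : {set V} -> option V) (a b c0 d f : V) p q :
  p < 4 -> q < 4 -> uniq [:: a; b; c0; d] -> uniq [:: b; c0; d; f] ->
  goodv c [set a; b; c0; d] (nth a [:: a; b; c0; d] p) ->
  goodv c [set b; c0; d; f] (nth b [:: b; c0; d; f] q) -> q = (p + 3) %% 4.
Proof.
move=> hp hq u1 u2 g1 g2.
have u1' := u1; have u2' := u2.
move: u1' u2'; rewrite /= !inE !negb_or => /and4P[/and3P[ab ac ad] /andP[bc bd] cd _]
  /and4P[/and3P[_ _ bf] /andP[_ cf] df _].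
set S := [set b; c0; d].
have cS : #|S| = 3 by apply: card3; by rewrite /= !inE !negb_or bc bd cd.
have S1 : [set a; b; c0; d] :\ a = S.
  apply/setP => x; rewrite !inE; case: (eqVneq x a) => [->|] //=.
  by rewrite (negbTE ab) (negbTE ac) (negbTE ad).
have S2 : [set b; c0; d; f] :\ f = S.
  apply/setP => x; rewrite !inE; case: (eqVneq x f) => [->|] //=; last by rewrite orbF.
  by rewrite eq_sym (negbTE bf) eq_sym (negbTE cf) eq_sym (negbTE df).
have sub1 : S \subset [set a; b; c0; d].
  by apply/subsetP => y; rewrite !inE => /orP[/orP[]|] /eqP ->; rewrite eqxx ?orbT.
have sub2 : S \subset [set b; c0; d; f].
  by apply/subsetP => y; rewrite !inE => /orP[/orP[]|] /eqP ->; rewrite eqxx ?orbT.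
have L1 : c S = if p == 0 then None else Some (nth a [:: a; b; c0; d] p).
  move: g1; rewrite /goodv.
  case: p hp => [|[|[|[|]]]] //= _ [g1 g1']; (by rewrite -S1) || (apply: (g1 S) => //; by rewrite !inE eqxx ?orbT).
have L2 : c S = if q == 3 then None else Some (nth b [:: b; c0; d; f] q).
  move: g2; rewrite /goodv.
  case: q hq => [|[|[|[|]]]] //= _ [g2 g2']; (by rewrite -S2) || (apply: (g2 S) => //; by rewrite !inE eqxx ?orbT).
move: L2; rewrite L1.
case: p hp {L1 g1} => [|[|[|[|]]]] //= _; case: q hq {g2} => [|[|[|[|]]]] //= _; 
  try (by move=> _); case=> E1;
  by rewrite ?E1 ?eqxx in ab ac ad bc bd cd.
Qed.

Lemma back (c : {set V} -> option V) : good_labelling E c -> tc_family_hom_free E 2.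
Proof.
move=> [cv cg] l l4 lmod [phi hom].
have l0 : 0 < l by apply: leq_trans l4.
pose w i k := phi (tc_vtx l i k).
have W : forall i k, w i.+1 k = w i k.+1.
  by move=> i k; rewrite /w /tc_vtx addSn addnS.
have Wl : forall k, w l k = w 0 k.
  by move=> k; rewrite /w /tc_vtx add0n -modnDml modnn add0n.
have H : forall i, uniq [:: w i 0; w i 1; w i 2; w i 3] /\
    [set w i 0; w i 1; w i 2; w i 3] \in E.
  move=> i; have := hom (i %% l) (ltn_pmod i l0).
  by rewrite /w /tc_vtx !modnDml.
pose P i p := p < 4 /\ goodv c [set w i 0; w i 1; w i 2; w i 3]
                             (nth (w i 0) [:: w i 0; w i 1; w i 2; w i 3] p).
have Ex : forall i, exists p, P i p.
  move=> i; have [v ve [g1 g2]] := cg _ (proj2 (H i)).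
  move: ve; rewrite !inE => /orP[/orP[/orP[]|]|] /eqP ev; subst v.
  - by exists 0.
  - by exists 1.
  - by exists 2.
  - by exists 3.
have St : forall i p q, P i p -> P i.+1 q -> q = (p + 3) %% 4.
  move=> i p q [hp gp] [hq gq]; move: gq; rewrite !W => gq.
  apply: (step_lemma hp hq (proj1 (H i)) _ gp gq).
  by have := proj1 (H i.+1); rewrite !W.
have Un : forall i p q, P i p -> P i q -> p = q.
  move=> i p q hp hq; have [r hr] := Ex i.+1.
  have := St _ _ _ hp hr; have := St _ _ _ hq hr.
  case: hp => hp _; case: hq => hq _; lia.
have [p0 h0] := Ex 0.
have Ind : forall n q, P n q -> q = (p0 + 3 * n) %% 4.
  elim=> [|n IH] q hq; first by rewrite muln0 addn0 modn_small ?(Un _ _ _ hq h0) //; case: h0.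
  have [r hr] := Ex n; have := IH _ hr; have := St _ _ _ hr hq.
  case: hq => hq _; case: hr => hr _; lia.
have hl : P l p0 by rewrite /P !Wl.
have := Ind _ _ hl; move: lmod; case: h0 => hp _; lia.
Qed.

Definition fr := {ffun 'I_4 -> V}.
Implicit Types t u w : fr.
Definition at_ (t : fr) (n : nat) : V := t (inord (n %% 4)).
Definition fl (t : fr) (i : nat) := [:: at_ t i; at_ t (i+1); at_ t (i+2); at_ t (i+3)].
Definition fs (t : fr) (i : nat) := [set at_ t i; at_ t (i+1); at_ t (i+2); at_ t (i+3)].

Lemma at_mod t n : at_ t n = at_ t (n %% 4).
Proof. by rewrite /at_ modn_mod. Qed.

Lemma at_eqmod t a b : a %% 4 = b %% 4 -> at_ t a = at_ t b.
Proof. by rewrite /at_ => ->. Qed.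

Lemma at_addmod t i q : at_ t (i + q) = at_ t (i %% 4 + q).
Proof. by rewrite /at_ modnDml. Qed.

Lemma at_ord t (k : 'I_4) : at_ t k = t k.
Proof. by rewrite /at_ modn_small // inord_val. Qed.

Lemma fl_rot (t : fr) i : injective t -> uniq (fl t i) /\ fs t i = fs t 0.
Proof.
move=> inj.
have h : forall a b : nat, a < 4 -> b < 4 -> (at_ t a == at_ t b) = (a == b).
  move=> a b ha hb; rewrite /at_ (inj_eq inj) !modn_small //.
  apply/eqP/eqP => [/(congr1 val)|->//]; by rewrite /= !inordK.
have e4 : at_ t 4 = at_ t 0 by rewrite at_mod.
have e5 : at_ t 5 = at_ t 1 by rewrite at_mod.
have e6 : at_ t 6 = at_ t 2 by rewrite at_mod.
rewrite /fl /fs -{1 5}[i]addn0 !(at_addmod t i).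
have : i %% 4 < 4 by rewrite ltn_mod.
move: (i %% 4) => r.
case: r => [|[|[|[|r]]]] // _.
all: rewrite ?addnE /=.
all: rewrite ?e4 ?e5 ?e6 /= !inE !h //; split => //; apply/setP => x; rewrite !inE.
all: do 4?(case: (x == _)) => //.
Qed.

Definition fset (t : fr) := fs t 0.

Lemma card4 (a b c d : V) : uniq [:: a; b; c; d] -> #|[set a; b; c; d]| = 4.
Proof.
move=> /card_uniqP /= h; rewrite -h; apply: eq_card => x; by rewrite !inE -!orbA.
Qed.

Lemma fset_card t : injective t -> #|fset t| = 4.
Proof. by move=> /(fl_rot 0) [u _]; rewrite /fset /fs card4. Qed.

Lemma ord4_cases (k : 'I_4) : [\/ k = inord 0, k = inord 1, k = inord 2 | k = inord 3].
Proof.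
case: k => [[|[|[|[|m]]]] hk] //.
- by apply: Or41; apply: val_inj; rewrite /= inordK.
- by apply: Or42; apply: val_inj; rewrite /= inordK.
- by apply: Or43; apply: val_inj; rewrite /= inordK.
- by apply: Or44; apply: val_inj; rewrite /= inordK.
Qed.

Lemma mem_fset t x : (x \in fset t) = [exists k, x == t k].
Proof.
apply/idP/existsP.
- rewrite /fset /fs !inE => /orP[/orP[/orP[]|]|] /eqP ->.
  + by exists (inord 0).
  + by exists (inord 1).
  + by exists (inord 2).
  + by exists (inord 3).
- move=> [k /eqP ->]; rewrite /fset /fs !inE.
  case: (ord4_cases k) => ->; rewrite -at_ord inordK // eqxx ?orbT //.
Qed.

Lemma fset_mem t (k : 'I_4) : t k \in fset t.
Proof. by rewrite mem_fset; apply/existsP; exists k. Qed.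

Lemma fset_memP t x : reflect (exists k, x = t k) (x \in fset t).
Proof.
rewrite mem_fset; apply: (iffP existsP) => [[k /eqP]|[k ->]]; by exists k.
Qed.


Definition tr (e e' : {set V}) (x : V) : V :=
  if x \in e' then x else odflt x [pick y in e' :\: e].

Lemma one_eq (A : {set V}) y z : #|A| = 1 -> y \in A -> z \in A -> y = z.
Proof. by move=> /eqP /cards1P [a ->]; rewrite !inE => /eqP -> /eqP ->. Qed.

Lemma cardD3 (e e' : {set V}) : #|e| = 4 -> #|e :&: e'| = 3 -> #|e :\: e'| = 1.
Proof. by move=> h1 h2; rewrite cardsD h1 h2. Qed.

Section Tr.
Variables e e' : {set V}.
Hypotheses (h1 : #|e| = 4) (h2 : #|e'| = 4) (h3 : #|e :&: e'| = 3).

Lemma c1 : #|e :\: e'| = 1. Proof. exact: cardD3. Qed.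
Lemma c2 : #|e' :\: e| = 1. Proof. by apply: cardD3 => //; rewrite setIC. Qed.

Lemma tr_in x : x \in e' -> tr e e' x = x.
Proof. by rewrite /tr => ->. Qed.

Lemma tr_out x : x \notin e' -> tr e e' x \in e' :\: e.
Proof.
move=> hx; rewrite /tr (negbTE hx).
case: pickP => [y hy //|none].
have /eqP /cards1P [a ha] := c2.
by have := none a; rewrite ha inE eqxx.
Qed.

Lemma tr_mem x : tr e e' x \in e'.
Proof.
case hx: (x \in e'); first by rewrite tr_in.
by have := tr_out (negbT hx); rewrite inE => /andP[].
Qed.
End Tr.

Lemma trK (e e' : {set V}) x : #|e| = 4 -> #|e'| = 4 -> #|e :&: e'| = 3 ->
  x \in e -> tr e' e (tr e e' x) = x.
Proof.
move=> h1 h2 h3 xe.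
case hx: (x \in e'); first by rewrite !tr_in.
have h3' : #|e' :&: e| = 3 by rewrite setIC.
have := tr_out h2 h3 (negbT hx); rewrite inE => /andP [ye _].
apply: (one_eq (c1 h1 h3)); first exact: (tr_out h1 h3' ye).
by rewrite inE hx xe.
Qed.

Lemma tr_inj (e e' : {set V}) x y : #|e| = 4 -> #|e'| = 4 -> #|e :&: e'| = 3 ->
  x \in e -> y \in e -> tr e e' x = tr e e' y -> x = y.
Proof.
move=> h1 h2 h3 xe ye h.
by rewrite -(trK h1 h2 h3 xe) h (trK h1 h2 h3 ye).
Qed.

Definition trf (e e' : {set V}) t : fr := [ffun k => tr e e' (t k)].

Lemma trf_props (e e' : {set V}) t : injective t -> fset t = e ->
  #|e'| = 4 -> #|e :&: e'| = 3 ->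
  injective (trf e e' t) /\ fset (trf e e' t) = e'.
Proof.
move=> inj ft h2 h3.
have h1 : #|e| = 4 by rewrite -ft fset_card.
have inj' : injective (trf e e' t).
  move=> k1 k2; rewrite !ffunE => /(tr_inj h1 h2 h3) h.
  by apply: inj; apply: h; rewrite -ft fset_mem.
split=> //; apply/eqP; rewrite eqEcard h2 fset_card // andbT.
by apply/subsetP => x /fset_memP [k ->]; rewrite ffunE (tr_mem h2 h3).
Qed.

Definition fadj : rel fr := fun t u =>
  [&& injectiveb t, injectiveb u, fset t \in E, fset u \in E,
      #|fset t :&: fset u| == 3 & [forall k, u k == tr (fset t) (fset u) (t k)]].

Lemma fadj_trf (e e' : {set V}) t : injective t -> fset t = e -> e \in E -> e' \in E ->
  #|e :&: e'| = 3 -> fadj t (trf e e' t).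
Proof.
move=> inj ft eE e'E h3.
have [inj' ft'] := trf_props inj ft (hE e'E) h3.
apply/and5P; split; try by apply/injectiveP.
- by rewrite ft.
- by rewrite ft'.
apply/andP; split; first by rewrite ft ft' h3.
by apply/forallP => k; rewrite ft ft' ffunE.
Qed.

Lemma fadj_sym : symmetric fadj.
Proof.
suff S : forall t u, fadj t u -> fadj u t.
  by move=> t u; apply/idP/idP; apply: S.
move=> t u /and5P [it iu tE uE /andP [/eqP h3 /forallP hk]].
apply/and5P; split=> //; apply/andP; split; first by rewrite setIC h3.
have h1 := hE tE; have h2 := hE uE.
apply/forallP => k; move/eqP: (hk k) => ->.
by rewrite trK // fset_mem.
Qed.


Definition rp t (r : {perm 'I_4}) : fr := [ffun k => t (r k)].

Lemma fset_rp t r : fset (rp t r) = fset t.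
Proof.
apply/setP => x; apply/fset_memP/fset_memP => [[k ->]|[k ->]].
- by exists (r k); rewrite ffunE.
- by exists (r^-1 k)%g; rewrite ffunE permKV.
Qed.

Lemma inj_rp t r : injective t -> injective (rp t r).
Proof. by move=> inj k1 k2; rewrite !ffunE => /inj /perm_inj. Qed.

Lemma fadj_rp t u r : fadj t u -> fadj (rp t r) (rp u r).
Proof.
move=> /and5P [/injectiveP it /injectiveP iu tE uE /andP [h3 /forallP hk]].
apply/and5P; split; try (apply/injectiveP; exact: inj_rp).
- by rewrite fset_rp.
- by rewrite fset_rp.
apply/andP; split; first by rewrite !fset_rp.
by apply/forallP => k; rewrite !fset_rp !ffunE; apply: hk.
Qed.

Lemma conn_map (f : fr -> fr) a b : (forall x y, fadj x y -> fadj (f x) (f y)) ->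
  connect fadj a b -> connect fadj (f a) (f b).
Proof.
move=> hf /connectP [p pth ->].
elim: p a pth => [|y p IH] a //= /andP [ay pth].
apply: connect_trans (connect1 (hf _ _ ay)) (IH _ pth).
Qed.

Lemma conn_valid t u : connect fadj t u -> injective t -> fset t \in E ->
  injective u /\ fset u \in E.
Proof.
move=> /connectP [p pth ->].
elim: p t pth => [|y p IH] t //= /andP [ty pth] _ _.
case/and5P: ty => _ /injectiveP iy _ yE _.
exact: IH.
Qed.

Lemma gamma_mul t r s : connect fadj t (rp t r) -> connect fadj t (rp t s) ->
  connect fadj t (rp t (r * s)%g).
Proof.
move=> h1 h2; apply: connect_trans h1 _.
have -> : rp t (r * s)%g = rp (rp t s) r.
  by apply/ffunP => k; rewrite !ffunE permM.
exact: (@conn_map (fun x => rp x r) _ _ (fun x y => @fadj_rp x y r) h2).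
Qed.


Definition dwalk (f : nat -> V) (m : nat) := forall i, i <= m ->
  uniq [:: f i; f (i+1); f (i+2); f (i+3)] /\ [set f i; f (i+1); f (i+2); f (i+3)] \in E.

Lemma fl_win t i : injective t -> fset t \in E ->
  uniq [:: at_ t i; at_ t (i+1); at_ t (i+2); at_ t (i+3)] /\
  [set at_ t i; at_ t (i+1); at_ t (i+2); at_ t (i+3)] \in E.
Proof. by move=> inj tE; have [u e] := fl_rot i inj; split => //; move: e; rewrite /fs => ->. Qed.

Lemma rot_walk t j d : injective t -> fset t \in E -> dwalk (fun n => at_ t (n + j)) d.
Proof.
move=> inj tE i _; rewrite !(addnAC i _ j); exact: fl_win.
Qed.

Definition cat_w (f g : nat -> V) m := fun x => if x < m then f x else g (x - m).

Lemma cat_w1 f g m : (forall k, k < 4 -> f (m + k) = g k) ->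
  forall x, x <= m + 3 -> cat_w f g m x = f x.
Proof.
move=> h x hx; rewrite /cat_w; case: ltnP => // hm.
have -> : x = m + (x - m) by lia.
by rewrite h ?addKn //; lia.
Qed.

Lemma cat_w2 f g m x : m <= x -> cat_w f g m x = g (x - m).
Proof. by rewrite /cat_w; case: ltnP. Qed.

Lemma cat_walk f m g n : dwalk f m -> dwalk g n ->
  (forall k, k < 4 -> f (m + k) = g k) -> dwalk (cat_w f g m) (m + n).
Proof.
move=> hf hg h i hi.
case: (leqP i m) => him.
  by rewrite !(cat_w1 h) //; [exact: hf | lia ..].
rewrite !cat_w2; try lia.
have -> : i + 1 - m = (i - m) + 1 by lia.
have -> : i + 2 - m = (i - m) + 2 by lia.
have -> : i + 3 - m = (i - m) + 3 by lia.
apply: hg; lia.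
Qed.


Definition walk_from f m t j u j' :=
  dwalk f m /\ (forall k, k < 4 -> f k = at_ t (k + j) /\ f (m + k) = at_ u (k + j')).

Lemma step_walk t u j : fadj t u ->
  exists f m j', walk_from f m t j u j' /\ (j + m) %% 4 = j' %% 4.
Proof.
move=> /and5P [/injectiveP it /injectiveP iu tE uE /andP [/eqP h3 /forallP hk]].
have h1 := hE tE; have h2 := hE uE.
have [x0 hx0] : exists x, x \in fset t :\: fset u.
  by have /eqP /cards1P [a ha] := c1 h1 h3; exists a; rewrite ha inE.
have [k0 ek0] : exists k0, x0 = t k0.
  by apply/fset_memP; move: hx0; rewrite inE => /andP [].
have hne : forall k, k != k0 -> u k = t k.
  move=> k hk'; rewrite (eqP (hk k)) tr_in //.
  apply: contraR hk' => hn; apply/eqP; apply: it.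
  apply: (one_eq (c1 h1 h3)); last by rewrite -ek0.
  by rewrite inE hn fset_mem.
have atne : forall n, n %% 4 != k0 -> at_ u n = at_ t n.
  move=> n hn; rewrite /at_ hne //; apply: contra hn => /eqP <-.
  by rewrite inordK // ltn_mod.
have ateq : forall n, n %% 4 = k0 -> at_ u n = u k0.
  by move=> n hn; rewrite -at_ord; apply: at_eqmod; rewrite hn modn_small.
have k0lt : k0 < 4 := ltn_ord k0.
pose d := (k0 + 4 - j %% 4) %% 4.
have hd : (j + d) %% 4 = k0 by rewrite /d; lia.
pose f n := if n < d + 4 then at_ t (n + j) else u k0.
exists f, d.+1, k0.+1; split; last by rewrite addnS; lia.
have fA : forall n, n < d + 4 -> f n = at_ t (n + j) by move=> n hn; rewrite /f hn.
have fB : forall n, d < n -> n <= d + 4 -> f n = at_ u (n + j).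
  move=> n hn hn3; rewrite /f; case: ltnP => hn2.
    rewrite atne //; apply/eqP => hh; move: hd hh hn hn2; clear; lia.
  rewrite ateq //; move: hd hn hn2 hn3; clear; lia.
split.
  move=> i hi; case: (leqP i d) => hid.
    rewrite !fA; try lia; rewrite !(addnAC i _ j); exact: fl_win.
  rewrite !fB; try lia; rewrite !(addnAC i _ j); exact: fl_win.
move=> k hkk; split; first by rewrite fA //; lia.
rewrite fB; try lia.
by apply: at_eqmod; move: hd hkk; clear; lia.
Qed.


Lemma lift t u : connect fadj t u -> injective t -> fset t \in E -> forall j,
  exists f m j', walk_from f m t j u j' /\ (j + m) %% 4 = j' %% 4.
Proof.
move=> /connectP [p pth ->].
elim: p t pth => [|y p IH] t /= pth inj tE j.
  exists (fun n => at_ t (n + j)), 0, j; rewrite addn0; split => //; split; first exact: rot_walk.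
  by move=> k _.
case/andP: pth => ty pth.
have [f1 [m1 [j1 [[w1 e1] hm1]]]] := step_walk j ty.
case/and5P: ty => _ /injectiveP iy _ yE _.
have [f2 [m2 [j2 [[w2 e2] hm2]]]] := IH y pth iy yE j1.
have jn : forall k, k < 4 -> f1 (m1 + k) = f2 k.
  by move=> k hk; rewrite (proj2 (e1 k hk)) (proj1 (e2 k hk)).
exists (cat_w f1 f2 m1), (m1 + m2), j2; split; last by lia.
split; first exact: cat_walk.
move=> k hk; split.
  by rewrite cat_w1 //; [exact: (proj1 (e1 k hk)) | lia].
rewrite cat_w2; last by lia.
by rewrite -addnA addKn; exact: (proj2 (e2 k hk)).
Qed.


Definition rotf t r : fr := [ffun k : 'I_4 => at_ t (k + r)].

Lemma at_rotf t r n : at_ (rotf t r) n = at_ t (n + r).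
Proof.
rewrite {1}/at_ ffunE inordK ?ltn_mod //; apply: at_eqmod; lia.
Qed.

Lemma closed_hom f M : dwalk f M -> 0 < M -> (forall k, k < 4 -> f (M + k) = f k) ->
  forall q, 0 < q -> tight_cycle_hom E (M * q) (fun n => f (n %% M)).
Proof.
move=> w M0 cl q q0.
have per : forall n, n <= M + 3 -> f n = f (n %% M).
  elim/ltn_ind => n IH hn.
  case: (ltnP n M) => hnM; first by rewrite modn_small.
  have -> : n = M + (n - M) by lia.
  rewrite cl; last by lia.
  by rewrite modnDl IH //; lia.
have key : forall i k, k <= 3 -> f ((tc_vtx (M * q) i k) %% M) = f (i %% M + k).
  move=> i k hk; rewrite /tc_vtx modn_dvdm ?dvdn_mulr // (per (i %% M + k)).
    by rewrite modnDml.
  have := ltn_pmod i M0; lia.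
move=> i hi; rewrite !key // addn0; apply: w.
by have := ltn_pmod i M0; lia.
Qed.

Lemma bad_rot (hf : tc_family_hom_free E 2) t r : injective t -> fset t \in E ->
  connect fadj t (rotf t r) -> r %% 4 != 0 -> False.
Proof.
move=> inj tE con hr.
have [f [m [j' [[w e] hm]]]] := lift con inj tE 0.
pose dd := (4 - (j' + r) %% 4) %% 4.
pose g n := at_ t (n + (j' + r)).
have jn : forall k, k < 4 -> f (m + k) = g k.
  by move=> k hk; rewrite (proj2 (e k hk)) at_rotf /g addnA.
have wF := cat_walk w (@rot_walk t (j' + r) dd inj tE) jn.
set F := cat_w f g m in wF.
have cl : forall k, k < 4 -> F (m + dd + k) = F k.
  move=> k hk; rewrite /F cat_w2; last by lia.
  rewrite cat_w1 //; last by lia.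
  rewrite (proj1 (e k hk)) /g; apply: at_eqmod; rewrite /dd; lia.
have M0 : 0 < m + dd by rewrite /dd; move: hm hr; clear; lia.
have [q [q0 [q4 q2]]] : exists q, 0 < q /\ 4 < (m + dd) * q /\ ((m + dd) * q) %% 4 = 2.
  case: (eqVneq ((m + dd) %% 4) 2) => h2.
    exists 3; move: h2 M0; clear; lia.
  exists 6; have : (m + dd) %% 4 != 0 by rewrite /dd; move: hm hr; clear; lia.
  move: h2 M0; clear; lia.
apply: (hf _ q4); first by rewrite q2.
by exists (fun n => F (n %% (m + dd))); apply: closed_hom.
Qed.


Lemma perm_of t w : injective t -> injective w -> fset w = fset t ->
  exists p : {perm 'I_4}, w = rp t p.
Proof.
move=> it iw ew.
have ex : forall k, exists j, t j = w k.
  move=> k; have : w k \in fset t by rewrite -ew fset_mem.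
  by move=> /fset_memP [j ->]; exists j.
pose f k := odflt k [pick j | t j == w k].
have fk : forall k, t (f k) = w k.
  move=> k; rewrite /f; case: pickP => [j /eqP //|none].
  by have [j hj] := ex k; have := none j; rewrite hj eqxx.
have finj : injective f by move=> a b hab; apply: iw; rewrite -!fk hab.
exists (perm finj); apply/ffunP => k; by rewrite !ffunE permE fk.
Qed.

Lemma fix_exists (hf : tc_family_hom_free E 2) t : injective t -> fset t \in E ->
  exists k : 'I_4, forall w, connect fadj t w -> fset w = fset t -> w k = t k.
Proof.
move=> it tE.
pose G := fun p : {perm 'I_4} => connect fadj t (rp t p).
have Gm : forall g h, G g -> G h -> G (g * h)%g by move=> g h; apply: gamma_mul.
have Gf : forall g, G g -> exists k, g k = k.
  move=> g Gg; case: (boolP [exists k, g k == k]) => [/existsP [k /eqP]|]; first by exists k.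
  move/existsPn => hfp; exfalso.
  have [s [r [hr hs]]] := conj_rot hfp.
  have c1' := @conn_map (fun x => rp x s) _ _ (fun x y => @fadj_rp x y s) Gg.
  have e1 : rp (rp t g) s = rotf (rp t s) r.
    by apply/ffunP => k; rewrite !ffunE hs /at_ ffunE.
  rewrite /= e1 in c1'.
  apply: (bad_rot hf _ _ c1' hr); first exact: inj_rp.
  by rewrite fset_rp.
have [k hk] := grp_fix Gm Gf.
exists k => w cw ew.
have [iw _] := conn_valid cw it tE.
have [p ep] := perm_of it iw ew.
by rewrite ep ffunE hk // /G -ep.
Qed.

Definition frame (e : {set V}) t := injectiveb t && (fset t == e).
Definition Fixb t (k : 'I_4) :=
  [forall w, (connect fadj t w && (fset w == fset t)) ==> (w k == t k)].
Definition Rs (e : {set V}) : {set fr * 'I_4} :=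
  [set rk | [exists t, [&& frame e t, root fadj t == rk.1 & Fixb t rk.2]]].
Definition vv (e : {set V}) : option V :=
  if [pick rk in Rs e] is Some rk then
    (if [pick t | frame e t && (root fadj t == rk.1)] is Some t then Some (t rk.2) else None)
  else None.
Definition cc (T : {set V}) : option V :=
  if [pick e in E | T \subset e] is Some e then
    (if vv e is Some x then (if x \in T then Some x else None) else None)
  else None.

Lemma csym : connect_sym fadj.
Proof. exact: (sym_connect_sym fadj_sym). Qed.

Lemma frame_ex e : e \in E -> exists t, frame e t.
Proof.
move=> eE; have h4 := hE eE.
have [x0 _] : exists x, x \in e.
  by apply/set0Pn; rewrite -card_gt0 h4.
have sz : size (enum e) = 4 by rewrite -cardE.
pose t : fr := [ffun k : 'I_4 => nth x0 (enum e) k].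
have it : injective t.
  move=> a b; rewrite !ffunE => /eqP; rewrite nth_uniq ?enum_uniq ?sz ?ltn_ord //.
  by move=> /eqP /val_inj.
exists t; apply/andP; split; first by apply/injectiveP.
rewrite eqEcard fset_card // h4 leqnn andbT.
apply/subsetP => x /fset_memP [k ->]; rewrite ffunE.
by rewrite -mem_enum mem_nth // sz ltn_ord.
Qed.

Lemma FixbP t k : reflect (forall w, connect fadj t w -> fset w = fset t -> w k = t k) (Fixb t k).
Proof.
apply: (iffP forallP) => [h w cw ew|h w].
  by apply/eqP; apply: (implyP (h w)); rewrite cw ew eqxx.
by apply/implyP => /andP [cw /eqP ew]; rewrite h.
Qed.

Lemma Fixb_same t0 t k : Fixb t0 k -> connect fadj t0 t -> fset t = fset t0 -> Fixb t k.
Proof.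
move=> /FixbP h c e; apply/FixbP => w cw ew.
rewrite (h w) ?(h t) //; last by rewrite ew.
exact: connect_trans c cw.
Qed.

Lemma Fixb_trf t k e e' : Fixb t k -> frame e t -> e \in E -> e' \in E -> #|e :&: e'| = 3 ->
  Fixb (trf e e' t) k.
Proof.
move=> /FixbP h /andP [/injectiveP it /eqP ft] eE e'E h3.
have h1 := hE eE; have h2 := hE e'E.
have [it' ft'] := trf_props it ft h2 h3.
have a1 := fadj_trf it ft eE e'E h3.
apply/FixbP => w cw ew.
have tE' : fset (trf e e' t) \in E by rewrite ft'.
have [iw _] := conn_valid cw it' tE'.
rewrite ft' in ew.
have h3' : #|e' :&: e| = 3 by rewrite setIC.
have a2 := fadj_trf iw ew e'E eE h3'.
have [iw'' fw''] := trf_props iw ew h1 h3'.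
have c : connect fadj t (trf e' e w).
  apply: connect_trans (connect1 a1) _; apply: connect_trans cw (connect1 a2).
have := h _ c; rewrite fw'' ft => /(_ erefl).
rewrite !ffunE => <-.
by rewrite trK // -ew fset_mem.
Qed.

Lemma Rs_sub e e' : e \in E -> e' \in E -> #|e :&: e'| = 3 -> Rs e \subset Rs e'.
Proof.
move=> eE e'E h3; apply/subsetP => -[r k]; rewrite !inE /= => /existsP [t /and3P [ft /eqP rt fx]].
apply/existsP; exists (trf e e' t).
case/andP: (ft) => /injectiveP it /eqP et.
have [it' ft'] := trf_props it et (hE e'E) h3.
have a1 := fadj_trf it et eE e'E h3.
apply/and3P; split.
- by apply/andP; split; [apply/injectiveP | apply/eqP].
- by rewrite -rt; apply/eqP/esym/(rootP csym); apply: connect1.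
- exact: Fixb_trf.
Qed.

Lemma Rs_eq e e' : e \in E -> e' \in E -> #|e :&: e'| = 3 -> Rs e = Rs e'.
Proof.
move=> eE e'E h3; apply/eqP; rewrite eqEsubset !Rs_sub //; by rewrite setIC.
Qed.

Lemma Rs_ne (hf : tc_family_hom_free E 2) e : e \in E -> exists rk, rk \in Rs e.
Proof.
move=> eE; have [t ft] := frame_ex eE.
case/andP: (ft) => /injectiveP it /eqP et.
have tE : fset t \in E by rewrite et.
have [k hk] := fix_exists hf it tE.
exists (root fadj t, k); rewrite inE; apply/existsP; exists t.
by rewrite ft eqxx /=; apply/FixbP.
Qed.

Lemma vv_some (hf : tc_family_hom_free E 2) e : e \in E -> exists x, vv e = Some x /\ x \in e.
Proof.
move=> eE; rewrite /vv; case: pickP => [[r k] hrk|none]; last first.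
  by have [rk h] := Rs_ne hf eE; have := none rk; rewrite h.
case: pickP => [t /andP [/andP [_ /eqP ft] _]|none].
  by exists (t k); split => //; rewrite -ft fset_mem.
move: hrk; rewrite inE => /existsP [t /and3P [ft rt _]].
by have := none t; rewrite ft rt.
Qed.

Lemma vv_adj e e' x : e \in E -> e' \in E -> #|e :&: e'| = 3 -> vv e = Some x ->
  vv e' = Some (tr e e' x).
Proof.
move=> eE e'E h3; rewrite /vv -(Rs_eq eE e'E h3).
case: pickP => // -[r k] hrk.
move: (hrk); rewrite inE => /existsP [t0 /and3P [ft0 /eqP rt0 fx0]] /=.
case: pickP => [t /andP [ft /eqP rt]|none]; last by have := none t0; rewrite ft0 rt0 eqxx.
case=> <-.
have ct : connect fadj t0 t by apply/(rootP csym); rewrite rt rt0.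
case/andP: (ft) => /injectiveP it /eqP et.
case/andP: (ft0) => _ /eqP et0.
have fx : Fixb t k by apply: Fixb_same fx0 ct _; rewrite et et0.
have [it' ft'] := trf_props it et (hE e'E) h3.
have a1 := fadj_trf it et eE e'E h3.
have fx' := Fixb_trf fx ft eE e'E h3.
case: pickP => [t' /andP [/andP [_ /eqP et'] /eqP rt']|none]; last first.
  have := none (trf e e' t); rewrite /frame ft' eqxx andbT.
  have -> : root fadj (trf e e' t) = r by rewrite -rt; apply/esym/(rootP csym); apply: connect1.
  by rewrite eqxx; move/injectiveP: it' => ->.
have c' : connect fadj (trf e e' t) t'.
  apply/(rootP csym); rewrite rt'; rewrite -rt; apply/esym/(rootP csym); exact: connect1.
by move/FixbP: fx' => /(_ t' c'); rewrite et' ft' ffunE => /(_ erefl) ->.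
Qed.

Lemma cc_spec (hf : tc_family_hom_free E 2) (e T : {set V}) : e \in E -> T \subset e -> #|T| = 3 ->
  cc T = if vv e is Some x then (if x \in T then Some x else None) else None.
Proof.
move=> eE Te cT; rewrite /cc; case: pickP => [e0 /andP [e0E Te0]|none]; last first.
  by have := none e; rewrite eE Te.
case: (eqVneq e0 e) => [->//|ne].
have h1 := hE eE; have h0 := hE e0E.
have TI0 : T \subset e0 :&: e by rewrite subsetI Te0 Te.
have le4 : #|e0 :&: e| <= 4 by rewrite -h0; apply: subset_leq_card; apply: subsetIl.
have h3 : #|e0 :&: e| = 3.
  have ge3 : 3 <= #|e0 :&: e| by rewrite -cT; apply: subset_leq_card.
  case: (eqVneq #|e0 :&: e| 4) => [h4|]; last by lia.
  have : e0 :&: e == e0 by rewrite eqEcard subsetIl h0 h4.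
  move=> /eqP /setIidPl s0.
  have : e0 == e by rewrite eqEcard s0 h0 h1.
  by rewrite (negbTE ne).
have TI : T = e0 :&: e by apply/eqP; rewrite eqEcard TI0 h3 cT.
have [x0 [v0 x0e0]] := vv_some hf e0E.
rewrite v0 (vv_adj e0E eE h3 v0).
case: (boolP (x0 \in e)) => xe; first by rewrite tr_in.
have := tr_out h1 h3 xe; rewrite inE => /andP [n0 _].
by rewrite TI !inE (negbTE xe) (negbTE n0) !andbF.
Qed.

Lemma forward (hf : tc_family_hom_free E 2) : exists c, good_labelling E c.
Proof.
exists cc; split.
  move=> T _ v; rewrite /cc; case: pickP => // e0 _; case: (vv e0) => // x.
  by case: ifP => // xT [<-].
move=> e eE; have [x [vx xe]] := vv_some hf eE.
exists x => //; split.
  move=> T Te cT xT; by rewrite (cc_spec hf eE Te cT) vx xT.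
have cT : #|e :\ x| = 3.
  by have := cardsD1 x e; rewrite xe hE //= add1n => -[].
rewrite (cc_spec hf eE (subsetDl _ _) cT) vx.
by rewrite !inE eqxx.
Qed.


End Main.

Theorem theorem1p2 (V : finType) (E : {set {set V}}) :
  uniform4 E ->
  (tc_family_hom_free E 2 <-> exists c : {set V} -> option V, good_labelling E c).
Proof.
move=> hE; split; first exact: forward.
by move=> [c g]; exact: back g.
Qed.
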